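(* Let $\Sigma$ be an alphabet with at least two letters, $k\ge1$, and $f\colon(\Sigma^* )^k\to\Sigma^*$ RCP. If there are $u_1,\ldots,u_k\in\Sigma^*$, all different from $\varepsilon$, with $f(u_1,\ldots,u_k)=\varepsilon$, then $f(x_1,\ldots,x_k)=\varepsilon$ for all $x_1,\ldots,x_k\in\Sigma^*$.
   Context: $\Sigma^*$ is the free monoid over $\Sigma$ (finite words, concatenation, empty word $\varepsilon$). A function $f\colon(\Sigma^* )^k\to\Sigma^*$ is RCP if for every monoid morphism $\varphi\colon\Sigma^*\to\Sigma^*$ and all $u_1,\ldots,u_k,v_1,\ldots,v_k$ with $\varphi(u_i)=\varphi(v_i)$ for all $i$, we have $\varphi(f(u_1,\ldots,u_k))=\varphi(f(v_1,\ldots,v_k))$. *)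

(* Defs.v *)
From mathcomp Require Import all_boot.
From mathcomp Require Import fintype.
Set Implicit Arguments. Unset Strict Implicit. Unset Printing Implicit Defensive.

Definition monoid_morphism (Sigma : Type) (phi : seq Sigma -> seq Sigma) : Prop :=
  phi [::] = [::] /\ forall u v : seq Sigma, phi (u ++ v) = phi u ++ phi v.

Definition RCP (Sigma : Type) (k : nat) (f : ('I_k -> seq Sigma) -> seq Sigma) : Prop :=
  forall phi : seq Sigma -> seq Sigma, monoid_morphism phi ->
  forall u v : 'I_k -> seq Sigma,
    (forall i, phi (u i) = phi (v i)) -> phi (f u) = phi (f v).

(* Main.v *)
Require Import Defs.
From mathcomp Require Import all_boot.
Set Implicit Arguments.

Section Aux.
Variables (Sigma : eqType) (k : nat) (f : ('I_k -> seq Sigma) -> seq Sigma).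
Hypothesis Hf : RCP f.

Lemma rcp_nonerase (phi : seq Sigma -> seq Sigma) (v w : 'I_k -> seq Sigma) :
  Defs.monoid_morphism phi -> (forall s, phi s = [::] -> s = [::]) ->
  (forall i, phi (v i) = phi (w i)) -> f v = [::] -> f w = [::].
Proof.
move=> mphi ne Hvw fv; apply: ne.
have := (Hf mphi v w Hvw); rewrite fv; case: mphi => -> _ <- //.
Qed.

Definition sig (a b : Sigma) (K : nat) (s : seq Sigma) :=
  flatten (map (fun c => if c == b then nseq K a else [:: a]) s).

Lemma sig_mm a b K : Defs.monoid_morphism (sig a b K).
Proof. by split => // u v; rewrite /sig map_cat flatten_cat. Qed.

Lemma sig_ne a b K : 0 < K -> forall s, sig a b K s = [::] -> s = [::].
Proof.
move=> K0 [|c s] //=; rewrite /sig /=; case: (c == b) => //.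
by case: K K0.
Qed.

Lemma sig1 a b s : sig a b 1 s = nseq (size s) a.
Proof. elim: s => //= c s IH; rewrite /sig /= -/(sig a b 1 s) IH; by case: (c == b). Qed.

Lemma sig_nseq a b K n : a != b -> sig a b K (nseq n a) = nseq n a.
Proof.
move=> ab; elim: n => //= n IH; rewrite /sig /= -/(sig a b K _) IH.
by rewrite (negbTE ab).
Qed.

Lemma sig_rcons a b K s : sig a b K (rcons s b) = sig a b K s ++ nseq K a.
Proof. by rewrite /sig -cats1 map_cat flatten_cat /= eqxx cats0. Qed.

Lemma size_pres (v w : 'I_k -> seq Sigma) (a b : Sigma) :
  (forall i, size (v i) = size (w i)) -> f v = [::] -> f w = [::].
Proof.
move=> Hs; apply: (rcp_nonerase _ (@sig_mm a b 1) (@sig_ne a b 1 (ltn0Sn 0))).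
by move=> i; rewrite !sig1 Hs.
Qed.

Lemma key (a b : Sigma) (u : 'I_k -> seq Sigma) :
  a != b -> (forall i, u i <> [::]) -> f u = [::] ->
  forall x, filter (predC1 a) (f x) = [::].
Proof.
move=> ab un fu x.
set K := (\max_i size (x i)).+1.
pose N i := size (u i).
have N0 i : 0 < N i by rewrite /N lt0n size_eq0; apply/eqP.
pose u' i := rcons (nseq (N i).-1 a) b.
have fu' : f u' = [::].
  apply: (@size_pres _ _ a b _ fu) => i; rewrite /u' size_rcons size_nseq prednK //.
pose v'' i := nseq ((N i).-1 + K) a.
have fv'' : f v'' = [::].
  apply: (rcp_nonerase _ (@sig_mm a b K) (@sig_ne a b K (ltn0Sn _))) fu' => i.
  rewrite /u' /v'' sig_rcons (@sig_nseq a b K _ ab) (@sig_nseq a b K _ ab).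
  by rewrite nseqD.
have xK i : size (x i) <= (N i).-1 + K.
  apply: leq_trans (leq_addl _ _); apply: leqW; exact: (leq_bigmax i).
pose v i := x i ++ nseq ((N i).-1 + K - size (x i)) a.
have fv : f v = [::].
  apply: (@size_pres _ _ a b _ fv'') => i.
  by rewrite /v /v'' size_cat !size_nseq subnKC.
have mf : Defs.monoid_morphism (filter (predC1 a)) by split => // s t; rewrite filter_cat.
have := (Hf mf v x); rewrite fv /= => -> // i.
rewrite /v filter_cat; set n := (_ - _); elim: n => [|n IH]; first by rewrite cats0.
by rewrite /= eqxx.
Qed.

End Aux.

Theorem mainTheorem14 (Sigma : finType) (k : nat)
  (f : ('I_k -> seq Sigma) -> seq Sigma) :
  1 < #|Sigma| -> 0 < k -> RCP f ->
  (exists u : 'I_k -> seq Sigma, (forall i, u i <> [::]) /\ f u = [::]) ->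
  forall x : 'I_k -> seq Sigma, f x = [::].
Proof.
move=> /card_gt1P [a [b [_ _ ab]]] _ Hf [u [un fu]] x.
have h1 := @key _ _ _ Hf a b u ab un fu x.
have h2 := @key _ _ _ Hf b a u (negbT (introF eqP (fun e => negP ab (introT eqP (esym e))))) un fu x.
case E: (f x) h1 h2 => [|c s] //=.
case: eqP => [->|_] //; rewrite (negbTE ab) //.
Qed.
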